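(* Let $$f(x)=c_0+c_1x^{e_1}+c_2x^{e_2}+\cdots+c_tx^{e_t}\in\mathbb{Q}[x]$$ with $c_1,\dots,c_t\in\mathbb{Q}\setminus\{0\}$ and distinct positive integers $e_1,\dots,e_t$. Let $B_T,B_H,B_N\in\mathbb{N}$ satisfy $t\le B_T$, $\mathrm{size}(c_i)\le B_H$ for $0\le i\le t$, and $\log_2\deg f\le B_N$. Then there exist $C_1,C_2\in\mathbb{N}$ with $\log_2 C_1\le 2B_HB_T$ and $\log_2 C_2\le \tfrac12 B_NB_T(B_T-1)$ such that for every prime $p$ with $p\nmid C_1$ and $(p-1)\nmid C_2$, $\tau(f^{(p)})$ is maximal, i.e., $\tau(f^{(p)})=t$.
   Context: For $q\in\mathbb{Q}$ written as $q=a/b$ with $a\in\mathbb{Z}$, $b\in\mathbb{N}$, $\gcd(a,b)=1$, $\mathrm{size}(q)=\lceil\log_2(|a|+1)\rceil+\lceil\log_2(b+1)\rceil+1$. For a prime $p$ and $f\in\mathbb{Q}[x]$, $f^{(p)}\in\mathbb{Z}_p[x]$ denotes the unique polynomial of degree less than $p$ which is congruent to $f$ modulo $x^p-x$ and whose coefficients are reduced modulo $p$. For a univariate polynomial $g$, $\tau(g)$ is the number of distinct non-zero, non-constant terms of $g$. *)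

(* Defs.v *)
From HB Require Import structures.
From mathcomp Require Import all_boot all_order all_algebra.
Set Implicit Arguments. Unset Strict Implicit. Unset Printing Implicit Defensive.
Import Order.TTheory GRing.Theory Num.Theory.
Local Open Scope ring_scope.

(* bit size of a rational q = a/b (lowest terms, b>0):
   ceil(log2(|a|+1)) + ceil(log2(b+1)) + 1.
   up_log 2 m is the least e with m <= 2^e, i.e. ceil(log2 m). *)
Definition bitsize (q : rat) : nat :=
  (up_log 2 (`|numq q|%N + 1) + up_log 2 (`|denq q|%N + 1) + 1)%N.

Definition sparse_poly (t : nat) (c0 : rat) (c : 'I_t -> rat) (e : 'I_t -> nat)
  : {poly rat} := c0%:P + \sum_(i < t) c i *: 'X^(e i).

(* reduction of a rational a/b modulo p: a * b^{-1} in F_p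
   (junk value 0 when p divides b, since 0^{-1} = 0 in MathComp) *)
Definition ratFp (p : nat) (q : rat) : 'F_p := (numq q)%:~R / (denq q)%:~R.

(* f^(p): coefficients reduced mod p, then reduced modulo x^p - x
   (the unique polynomial of degree < p congruent to it) *)
Definition polyFp (p : nat) (f : {poly rat}) : {poly 'F_p} :=
  (map_poly (ratFp p) f) %% ('X^p - 'X).

Definition tau (F : nzRingType) (g : {poly F}) : nat :=
  count (fun i => g`_i != 0) (iota 1 (size g).-1).

(* Main.v *)
Require Import Defs.
From HB Require Import structures.
From mathcomp Require Import all_boot all_order all_algebra zify.
Import Order.TTheory GRing.Theory Num.Theory.
Local Open Scope ring_scope.

Lemma coef_sparse (R : nzRingType) (t : nat) (a0 : R) (a : 'I_t -> R) (e : 'I_t -> nat) k :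
  injective e -> (forall i, (0 < e i)%N) ->
  (a0%:P + \sum_(i < t) a i *: 'X^(e i))`_k =
  if k == 0%N then a0 else if [pick i | e i == k] is Some i then a i else 0.
Proof.
move=> einj epos.
rewrite coefD coefC coef_sum.
under eq_bigr do rewrite coefZ coefXn.
case: eqP => [->|k0].
  by rewrite big1 ?addr0 // => i _; rewrite (ltn_eqF (epos i)) mulr0.
rewrite add0r; case: pickP => [i /eqP ei | none].
  rewrite (bigD1 i) //= ei eqxx mulr1 big1 ?addr0 // => j ji.
  case: eqP => [ejk|]; last by rewrite mulr0.
  by move: ji; rewrite -ei in ejk; rewrite (einj _ _ ejk) eqxx.
by rewrite big1 // => i _; have := none i; rewrite eq_sym => /= ->; rewrite mulr0.
Qed.

Lemma Xn_modp (F : fieldType) (p e : nat) : (1 < p)%N -> (0 < e)%N ->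
  ('X^e : {poly F}) %% ('X^p - 'X) = 'X^((e.-1 %% p.-1).+1).
Proof.
move=> p1; elim/ltn_ind: e => e IH e0.
have sd : size ('X^p - 'X : {poly F}) = p.+1.
  by rewrite size_polyDl size_polyXn // size_polyN size_polyX.
case: (ltnP e p) => [lt|ge].
  rewrite modn_small; last by lia.
  rewrite prednK // modp_small // sd size_polyXn; lia.
have -> : ('X^e : {poly F}) = 'X^(e-p) * ('X^p - 'X) + 'X^(e - p.-1).
  rewrite mulrBr -exprD subnK // -exprSr.
  have -> : (e - p.-1 = (e - p).+1)%N by lia.
  by rewrite subrK.
rewrite modpD modp_mull add0r IH; [|lia|lia].
have -> : (e.-1 = (e - p.-1).-1 + p.-1)%N by lia.
by rewrite modnDr.
Qed.

Lemma count_image (t N : nat) (r : 'I_t -> nat) (P : pred nat) :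
  injective r -> (forall i, 0 < r i < N)%N ->
  (forall k, (0 < k < N)%N -> P k = (k \in [seq r i | i <- enum 'I_t])) ->
  count P (iota 1 N.-1) = t.
Proof.
move=> rinj rb hP.
rewrite (@eq_in_count _ _ (mem [seq r i | i <- enum 'I_t])); last first.
  move=> k; rewrite mem_iota => hk; apply: hP; lia.
rewrite -size_filter.
rewrite (perm_size (@uniq_perm _ _ [seq r i | i <- enum 'I_t] _ _ _)).
- by rewrite size_map size_enum_ord.
- by rewrite filter_uniq // iota_uniq.
- by rewrite (map_inj_uniq rinj) enum_uniq.
move=> x; rewrite mem_filter /=; case Hx: (x \in _) => //=.
move/mapP: Hx => [i _ ->]; rewrite mem_iota; have := rb i; lia.
Qed.
Definition dd (a b : nat) : nat := (a - b + (b - a))%N.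

Lemma dd_mod d a b : (0 < a)%N -> (0 < b)%N -> (a.-1 %% d = b.-1 %% d)%N -> (d %| dd a b)%N.
Proof.
wlog h : a b / (a <= b)%N.
  move=> W; case: (leqP a b) => [|/ltnW] h a0 b0 hm; first by apply: W.
  by rewrite /dd addnC; apply: W.
move=> a0 b0 hm.
have -> : dd a b = (b.-1 - a.-1)%N by rewrite /dd; lia.
by rewrite -eqn_mod_dvd; [rewrite hm | lia].
Qed.

Lemma intr_Fp0 (p : nat) (z : int) : prime p ->
  ((z%:~R : 'F_p) == 0) = (p %| absz z)%N.
Proof.
move=> pr; rewrite (dvdn_pcharf (pchar_Fp pr)).
case: z => n /=; first by [].
by rewrite NegzE mulrNz oppr_eq0.
Qed.

Lemma ratFp_neq0 p q : prime p -> ~~ (p %| absz (numq q) * absz (denq q))%N ->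
  ratFp p q != 0.
Proof.
move=> pr; rewrite Euclid_dvdM // negb_or => /andP [h1 h2].
by rewrite /ratFp mulf_neq0 // ?invr_eq0 intr_Fp0.
Qed.

Lemma ratFp0 p : ratFp p 0 = 0.
Proof. by rewrite /ratFp mul0r. Qed.
Lemma sizeXpX (F : fieldType) p : (1 < p)%N -> size ('X^p - 'X : {poly F}) = p.+1.
Proof. by move=> p1; rewrite size_polyDl size_polyXn // size_polyN size_polyX. Qed.

Theorem mainTheorem3 (t : nat) (c0 : rat) (c : 'I_t -> rat) (e : 'I_t -> nat)
    (BT BH BN : nat) :
  (forall i, c i != 0) ->
  injective e ->
  (forall i, (0 < e i)%N) ->
  (t <= BT)%N ->
  (bitsize c0 <= BH)%N ->
  (forall i, bitsize (c i) <= BH)%N ->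
  ((size (sparse_poly c0 c e)).-1 <= 2 ^ BN)%N ->
  exists C1 C2 : nat,
    [/\ (0 < C1)%N, (C1 <= 2 ^ (2 * BH * BT))%N,
        (0 < C2)%N, (C2 <= 2 ^ ((BN * BT * (BT - 1)) %/ 2))%N &
        forall p : nat, prime p -> ~~ (p %| C1)%N -> ~~ (p.-1 %| C2)%N ->
          tau (polyFp p (sparse_poly c0 c e)) = t].
Proof.
move=> cnz einj epos tB hc0 hc hdeg.
set f := sparse_poly c0 c e.
have fcoef : forall i, f`_(e i) = c i.
  move=> i; rewrite /f /sparse_poly coef_sparse // (gtn_eqF (epos i)).
  case: pickP => [j /eqP /einj -> // | none].
  by have := none i; rewrite eqxx.
have ebound : forall i, (e i <= 2 ^ BN)%N.
  move=> i; have : (e i < size f)%N.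
    rewrite ltnNge; apply/negP => hs; have := cnz i.
    by rewrite -fcoef nth_default // eqxx.
  move: hdeg; rewrite -/f; lia.
pose C1 := (\prod_(i < t) (absz (numq (c i)) * absz (denq (c i))))%N.
pose e' := fun n => nth 0%N [seq e i | i <- enum 'I_t] n.
have e'E : forall i : 'I_t, e' i = e i.
  by move=> i; rewrite /e' (nth_map i) ?nth_ord_enum // size_enum_ord.
pose C2 := (\prod_(j < t) \prod_(i < j) dd (e' i) (e' j))%N.
have C2dvd : forall i j : 'I_t, i != j -> (dd (e i) (e j) %| C2)%N.
  have W : forall i j : 'I_t, (i < j)%N -> (dd (e i) (e j) %| C2)%N.
    move=> i j hij; rewrite /C2 (bigD1 j) //=; apply: dvdn_mulr.
    rewrite (bigD1 (Ordinal hij)) //=; apply: dvdn_mulr.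
    by rewrite !e'E.
  move=> i j; rewrite neq_ltn => /orP [] h; first exact: W.
  by rewrite /dd addnC; apply: W.
exists C1, C2; split.
- rewrite prodn_gt0 // => i; rewrite muln_gt0 !absz_gt0 numq_eq0 cnz.
  by rewrite denq_neq0.
- apply: (leq_trans (@leq_prod _ _ _ _ (fun _ => 2 ^ BH)%N _)).
    move=> i _.
    have h1 := @up_logP 2 (absz (numq (c i)) + 1)%N isT.
    have h2 := @up_logP 2 (absz (denq (c i)) + 1)%N isT.
    have hb := hc i; rewrite /bitsize in hb.
    apply: (leq_trans (leq_mul (leq_trans (leq_addr 1 _) h1) (leq_trans (leq_addr 1 _) h2))).
    by rewrite -expnD leq_pexp2l //; lia.
  rewrite prod_nat_const card_ord -expnM leq_pexp2l //; nia.
- rewrite prodn_gt0 // => j; rewrite prodn_gt0 // => i.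
  have H := ltn_trans (ltn_ord i) (ltn_ord j).
  have := e'E (Ordinal H); rewrite /= => ->; rewrite e'E.
  have hne : e (Ordinal H) <> e j.
    by move=> /einj /(congr1 val) /= h; have := ltn_ord i; rewrite h ltnn.
  rewrite /dd; lia.
- apply: (leq_trans (@leq_prod _ _ _ _ (fun j : 'I_t => 2 ^ (BN * j))%N _)).
    move=> j _; rewrite expnM.
    apply: (leq_trans (@leq_prod _ _ _ _ (fun _ => 2 ^ BN)%N _)).
      move=> i _; have H := ltn_trans (ltn_ord i) (ltn_ord j).
      have := e'E (Ordinal H); rewrite /= => ->; rewrite e'E.
      have := ebound (Ordinal H); have := ebound j; rewrite /dd; lia.
    by rewrite prod_nat_const card_ord.
  rewrite -expn_sum -big_distrr /= -(big_mkord xpredT (fun j => j)) bin2_sum bin2.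
  rewrite leq_pexp2l // -divn2 leq_divRL //.
  have h1 := leq_trunc_div (t * t.-1) 2.
  have h2 : (t * t.-1 <= BT * (BT - 1))%N by apply: leq_mul => //; lia.
  rewrite -mulnA -mulnA leq_mul2l; apply/orP; right.
  by apply: leq_trans h1 h2.
move=> p pr hp1 hp2.
have p1 := prime_gt1 pr.
pose r := fun i => ((e i).-1 %% p.-1).+1.
have rpos : forall i, (0 < r i)%N by [].
have rinj : injective r.
  move=> i j /succn_inj hm; case: (eqVneq i j) => // hij; exfalso.
  have h1 : (p.-1 %| dd (e i) (e j))%N by apply: dd_mod.
  by move/negP: hp2; apply; apply: dvdn_trans h1 (C2dvd _ _ hij).
have Dnz : forall i, ratFp p (c i) != 0.
  move=> i; apply: ratFp_neq0 => //; apply: contra hp1 => h.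
  by apply: dvdn_trans h _; rewrite /C1 (bigD1 i) //=; apply: dvdn_mulr.
have hmap : map_poly (ratFp p) f =
    (ratFp p c0)%:P + \sum_(i < t) ratFp p (c i) *: 'X^(e i).
  apply/polyP => k; rewrite coef_map_id0 ?ratFp0 // /f /sparse_poly !coef_sparse //.
  by case: (k == 0%N) => //; case: pickP => // _; exact: ratFp0.
have hmod : polyFp p f = (ratFp p c0)%:P + \sum_(i < t) ratFp p (c i) *: 'X^(r i).
  rewrite /polyFp hmap modpD (big_morph (fun q => q %% ('X^p - 'X)) (modpD _) (mod0p _)).
  rewrite modp_small; last first.
    by rewrite sizeXpX // size_polyC; case: (_ != 0) => /=; lia.
  by congr (_ + _); apply: eq_bigr => i _; rewrite modpZl Xn_modp.
rewrite hmod /tau; apply: (@count_image t _ r) => //.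
  move=> i; rewrite rpos /=; rewrite ltnNge; apply/negP => hs.
  have := Dnz i; rewrite -(nth_default 0 hs) (@coef_sparse _ t _ _ r) //.
  rewrite (gtn_eqF (rpos i)); case: pickP => [j /eqP /rinj -> | none].
    by rewrite eqxx.
  by have := none i; rewrite eqxx.
move=> k /andP [k0 _]; rewrite (@coef_sparse _ t _ _ r) // (gtn_eqF k0).
case: pickP => [j /eqP hj | none].
  by rewrite Dnz; symmetry; apply/mapP; exists j; rewrite ?mem_enum.
rewrite eqxx; symmetry; apply/negbTE/mapP => [[j _ hj]].
by have := none j; rewrite hj eqxx.
Qed.
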